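(* There is an absolute constant $C$ such that for every $g:\{0,1\}^n\to\{0,1\}$ and all $0<\delta<\epsilon<1/2$, $$\log\mathsf{qprt}_\delta(g)\le\frac{C}{(1/2-\epsilon)^2}\log\frac1\delta\cdot\log\mathsf{qprt}_\epsilon(g).$$
   Context: For $s\in\{0,1,\star\}^n$ the subcube with support $s$ is $\{x\in\{0,1\}^n: s_i\ne\star\Rightarrow x_i=s_i\}$, and for such a subcube $A$, $|A|$ is the number of $i$ with $s_i\in\{0,1\}$. $\mathsf{qprt}_\epsilon(g)$ is the optimal value of the LP: minimize $\sum_{z\in\{0,1\}}\sum_A w_{z,A}2^{|A|}$ over subcubes $A$, subject to $\sum_{A\ni x}w_{g(x),A}\ge1-\epsilon$ for all $x$; $\sum_{A\ni x}\sum_z w_{z,A}=1$ for all $x$; $w_{z,A}\ge0$. Logs base 2. *)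

(* Defs.v *)
From Stdlib Require Import Reals List ClassicalEpsilon.
Import ListNotations.
Open Scope R_scope.

(* Points of {0,1}^n are lists of booleans of length n.
   A subcube is given by its support s in {0,1,*}^n, encoded as a list of
   length n of [option bool]: [Some b] = fixed coordinate b, [None] = star. *)
Definition support := list (option bool).

Fixpoint all_supports (n : nat) : list support :=
  match n with
  | O => [ [] ]
  | S m => flat_map (fun s => [None :: s; Some false :: s; Some true :: s])
                    (all_supports m)
  end.

Fixpoint in_subcube (x : list bool) (s : support) : Prop :=
  match x, s with
  | [], [] => True
  | b :: x', None :: s' => in_subcube x' s'
  | b :: x', Some c :: s' => b = c /\ in_subcube x' s'
  | _, _ => False
  end.

Fixpoint codim (s : support) : nat :=
  match s with
  | [] => O
  | None :: s' => codim s'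
  | Some _ :: s' => S (codim s')
  end.

Definition lsum {A : Type} (f : A -> R) (l : list A) : R :=
  fold_right (fun a r => f a + r) 0 l.

Definition sum_containing (n : nat) (x : list bool) (f : support -> R) : R :=
  lsum (fun s => f s) (filter (fun s =>
     if (excluded_middle_informative (in_subcube x s)) then true else false)
     (all_supports n)).

Definition qprt_objective (n : nat) (w : bool -> support -> R) : R :=
  lsum (fun z => lsum (fun s => w z s * 2 ^ codim s) (all_supports n))
       [false; true].

Definition qprt_feasible (n : nat) (eps : R) (g : list bool -> bool)
  (w : bool -> support -> R) : Prop :=
  (forall z s, In s (all_supports n) -> 0 <= w z s) /\
  (forall x : list bool, length x = n ->
     sum_containing n x (w (g x)) >= 1 - eps) /\
  (forall x : list bool, length x = n ->
     sum_containing n x (fun s => lsum (fun z => w z s) [false; true]) = 1).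

Definition is_inf (E : R -> Prop) (m : R) : Prop :=
  (forall x, E x -> m <= x) /\ (forall b, (forall x, E x -> b <= x) -> b <= m).

Definition qprt (n : nat) (eps : R) (g : list bool -> bool) : R :=
  epsilon (inhabits 0)
    (is_inf (fun v => exists w, qprt_feasible n eps g w /\ v = qprt_objective n w)).

Definition log2 (x : R) : R := ln x / ln 2.

(* Main.v *)
Require Import Defs.
From Stdlib Require Import Reals Lra Lia ZArith List ClassicalEpsilon.
Import ListNotations.
Open Scope R_scope.

Lemma lsum_nil {A} (f : A -> R) : lsum f [] = 0.
Proof. reflexivity. Qed.
Lemma lsum_cons {A} (f : A -> R) a l : lsum f (a :: l) = f a + lsum f l.
Proof. reflexivity. Qed.
Lemma lsum_app {A} (f : A -> R) l1 l2 : lsum f (l1 ++ l2) = lsum f l1 + lsum f l2.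
Proof. induction l1; simpl; unfold lsum in *; simpl in *; [lra|]. rewrite IHl1; lra. Qed.
Lemma lsum_flat_map {A B} (f : B -> R) (g : A -> list B) l :
  lsum f (flat_map g l) = lsum (fun a => lsum f (g a)) l.
Proof. induction l; cbn [flat_map]; [reflexivity|]. rewrite lsum_app, lsum_cons, IHl. reflexivity. Qed.
Lemma lsum_map {A B} (f : B -> R) (g : A -> B) l : lsum f (map g l) = lsum (fun a => f (g a)) l.
Proof. induction l; cbn [map]; [reflexivity|]. rewrite !lsum_cons, IHl. reflexivity. Qed.
Lemma lsum_ext {A} (f g : A -> R) l : (forall a, In a l -> f a = g a) -> lsum f l = lsum g l.
Proof. induction l; intros H; [reflexivity|]. rewrite !lsum_cons, H, IHl; auto. intros; apply H; simpl; auto. simpl; auto. Qed.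
Lemma lsum_le {A} (f g : A -> R) l : (forall a, In a l -> f a <= g a) -> lsum f l <= lsum g l.
Proof. induction l; intros H; [simpl; lra|]. rewrite !lsum_cons. assert (f a <= g a) by (apply H; simpl; auto).
  assert (lsum f l <= lsum g l) by (apply IHl; intros; apply H; simpl; auto). lra. Qed.
Lemma lsum_nonneg {A} (f : A -> R) l : (forall a, In a l -> 0 <= f a) -> 0 <= lsum f l.
Proof. intros H. replace 0 with (lsum (fun _ : A => 0) l). apply lsum_le; auto.
  induction l; [reflexivity|]. rewrite lsum_cons, IHl; [lra|]. intros; apply H; simpl; auto. Qed.
Lemma lsum_plus {A} (f g : A -> R) l : lsum (fun a => f a + g a) l = lsum f l + lsum g l.
Proof. induction l; [simpl; unfold lsum; simpl; lra|]. rewrite !lsum_cons, IHl; lra. Qed.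
Lemma lsum_scal {A} (c : R) (f : A -> R) l : lsum (fun a => c * f a) l = c * lsum f l.
Proof. induction l; [unfold lsum; simpl; lra|]. rewrite !lsum_cons, IHl; lra. Qed.
Lemma lsum_scal_r {A} (c : R) (f : A -> R) l : lsum (fun a => f a * c) l = lsum f l * c.
Proof. induction l; [unfold lsum; simpl; lra|]. rewrite !lsum_cons, IHl; lra. Qed.
Lemma lsum_zero {A} (l : list A) : lsum (fun _ => 0) l = 0.
Proof. induction l; [reflexivity|]. rewrite lsum_cons, IHl; lra. Qed.
Lemma lsum_swap {A B} (F : A -> B -> R) l1 l2 :
  lsum (fun a => lsum (fun b => F a b) l2) l1 = lsum (fun b => lsum (fun a => F a b) l1) l2.
Proof. induction l1.
  - rewrite lsum_nil. symmetry. apply lsum_zero.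
  - rewrite lsum_cons, IHl1. rewrite <- lsum_plus. reflexivity. Qed.
Lemma lsum_mult {A B} (f : A -> R) (g : B -> R) l1 l2 :
  lsum f l1 * lsum g l2 = lsum (fun a => lsum (fun b => f a * g b) l2) l1.
Proof. rewrite <- lsum_scal_r. apply lsum_ext; intros. rewrite lsum_scal. reflexivity. Qed.
Lemma lsum_filter {A} (f : A -> R) (p : A -> bool) l :
  lsum f (filter p l) = lsum (fun a => if p a then f a else 0) l.
Proof. induction l; [reflexivity|]. cbn [filter]. rewrite lsum_cons; cbv beta. destruct (p a); rewrite ?lsum_cons, IHl; lra. Qed.
Definition ob (b : bool) (o : option bool) : bool :=
  match o with None => true | Some c => Bool.eqb b c end.
Fixpoint inb (x : list bool) (s : support) : bool :=
  match x, s with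
  | [], [] => true
  | b :: x', o :: s' => ob b o && inb x' s'
  | _, _ => false
  end.
Lemma inb_spec x s : inb x s = true <-> in_subcube x s.
Proof.
  revert s; induction x as [|b x IH]; intros [|o s]; simpl; try tauto; try (split; intros; discriminate || contradiction).
  destruct o as [c|]; simpl.
  - rewrite Bool.andb_true_iff, IH. split; intros [H1 H2]; split; auto.
    apply Bool.eqb_prop; auto. subst; apply Bool.eqb_reflx.
  - apply IH.
Qed.
Definition oeqb (o p : option bool) : bool :=
  match o, p with None, None => true | Some a, Some b => Bool.eqb a b | _, _ => false end.
Fixpoint sup_eqb (s t : support) : bool :=
  match s, t with
  | [], [] => true
  | o :: s', p :: t' => oeqb o p && sup_eqb s' t'
  | _, _ => false
  end.
Lemma sup_eqb_spec s t : sup_eqb s t = true <-> s = t.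
Proof.
  revert t; induction s as [|o s IH]; intros [|p t]; simpl; try (split; intros; congruence).
  rewrite Bool.andb_true_iff, IH. split.
  - intros [H1 H2]; subst. destruct o as [[|]|], p as [[|]|]; simpl in H1; congruence.
  - intros H; inversion H; subst. split; auto. destruct p as [[|]|]; reflexivity.
Qed.
Lemma sup_eqb_sym s t : sup_eqb s t = sup_eqb t s.
Proof.
  destruct (sup_eqb s t) eqn:E; destruct (sup_eqb t s) eqn:F; auto.
  - apply sup_eqb_spec in E; subst. rewrite <- F. symmetry; apply sup_eqb_spec; auto.
  - apply sup_eqb_spec in F; subst. rewrite <- E. apply sup_eqb_spec; auto.
Qed.

Lemma all_supports_length n s : In s (all_supports n) -> length s = n.
Proof.
  revert s; induction n; simpl; intros s H.
  - destruct H as [H|[]]; subst; reflexivity.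
  - apply in_flat_map in H. destruct H as [t [Ht H]].
    simpl in H. destruct H as [H|[H|[H|[]]]]; subst; simpl; f_equal; auto.
Qed.

Lemma delta n s0 (f : support -> R) : length s0 = n ->
  lsum (fun s => if sup_eqb s s0 then f s else 0) (all_supports n) = f s0.
Proof.
  revert s0 f; induction n; intros s0 f Hl.
  - destruct s0; [|discriminate]. simpl. unfold lsum; simpl. lra.
  - destruct s0 as [|o s0]; [discriminate|]. simpl in Hl. injection Hl; intros Hl'.
    cbn [all_supports]. rewrite lsum_flat_map.
    rewrite <- (IHn s0 (fun s => f (o :: s)) Hl').
    apply lsum_ext. intros s _. rewrite !lsum_cons, lsum_nil. cbn [sup_eqb].
    destruct o as [[|]|]; simpl; destruct (sup_eqb s s0); simpl; lra.
Qed.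

Lemma collapse {T} n (L : list T) (sp : T -> support) (G : T -> R) (h : support -> R) :
  (forall t, In t L -> length (sp t) = n) ->
  lsum (fun s => h s * lsum (fun t => if sup_eqb (sp t) s then G t else 0) L) (all_supports n)
  = lsum (fun t => h (sp t) * G t) L.
Proof.
  intros HL.
  transitivity (lsum (fun s => lsum (fun t => if sup_eqb s (sp t) then h s * G t else 0) L) (all_supports n)).
  { apply lsum_ext; intros s _. rewrite <- lsum_scal. apply lsum_ext; intros t _.
    rewrite sup_eqb_sym. destruct (sup_eqb s (sp t)); lra. }
  rewrite lsum_swap. apply lsum_ext; intros t Ht.
  apply (delta n (sp t) (fun s => h s * G t)). auto.
Qed.

Fixpoint meet (s1 s2 : support) : option support :=
  match s1, s2 with
  | [], [] => Some []
  | o1 :: s1', o2 :: s2' =>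
      match meet s1' s2' with
      | None => None
      | Some s =>
          match o1, o2 with
          | None, o => Some (o :: s)
          | o, None => Some (o :: s)
          | Some b, Some c => if Bool.eqb b c then Some (Some b :: s) else None
          end
      end
  | _, _ => None
  end.

Lemma meet_in x s1 s2 :
  (inb x s1 && inb x s2)%bool = match meet s1 s2 with Some s => inb x s | None => false end.
Proof.
  revert s1 s2; induction x as [|b x IH]; intros [|o1 s1] [|o2 s2]; simpl; auto.
  all: try (destruct (meet s1 s2); auto; fail).
  - destruct (meet s1 s2); auto. destruct o1 as [[|]|], o2 as [[|]|]; simpl; auto.
  - apply Bool.andb_false_r.
  - specialize (IH s1 s2). destruct (meet s1 s2) as [s|].
    + destruct o1 as [[|]|], o2 as [[|]|], b; simpl; rewrite <- ?IH;
      destruct (inb x s1), (inb x s2); simpl; auto.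
    + destruct (inb x s1), (inb x s2); simpl in IH; try discriminate;
      destruct o1 as [[|]|], o2 as [[|]|], b; simpl; auto.
Qed.
Lemma meet_len s1 s2 s : meet s1 s2 = Some s -> length s = length s1.
Proof.
  revert s2 s; induction s1 as [|o1 s1 IH]; intros [|o2 s2] s H; simpl in H; try discriminate.
  - injection H; intros; subst; reflexivity.
  - destruct (meet s1 s2) as [t|] eqn:E; [|discriminate].
    apply IH in E. destruct o1 as [b|], o2 as [c|]; try (injection H; intros; subst; simpl; auto; fail).
    destruct (Bool.eqb b c); [|discriminate]. injection H; intros; subst; simpl; auto.
Qed.

Lemma meet_codim s1 s2 s : meet s1 s2 = Some s -> (codim s <= codim s1 + codim s2)%nat.
Proof.
  revert s2 s; induction s1 as [|o1 s1 IH]; intros [|o2 s2] s H; simpl in H; try discriminate.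
  - injection H; intros; subst; simpl; lia.
  - destruct (meet s1 s2) as [t|] eqn:E; [|discriminate].
    apply IH in E. destruct o1 as [b|], o2 as [c|]; try (injection H; intros; subst; simpl; lia; fail).
    destruct (Bool.eqb b c); [|discriminate]. injection H; intros; subst; simpl; lia.
Qed.

Lemma inb_repeat x : inb x (repeat None (length x)) = true.
Proof. induction x; simpl; auto. Qed.
Lemma codim_repeat n : codim (repeat None n) = 0%nat.
Proof. induction n; simpl; auto. Qed.
Lemma inb_len x s : inb x s = true -> length x = length s.
Proof. revert s; induction x; intros [|o s]; simpl; try discriminate; auto.
  rewrite Bool.andb_true_iff. intros [_ H]. f_equal; auto. Qed.
Lemma codim_le s : (codim s <= length s)%nat.
Proof. induction s as [|[|] s]; simpl; lia. Qed.
Lemma inb_point x s : (inb x s && Nat.eqb (codim s) (length x))%bool = sup_eqb s (map Some x).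
Proof.
  revert s; induction x as [|b x IH]; intros [|o s]; simpl; auto.
  destruct o as [c|]; simpl.
  - rewrite <- IH. destruct b, c; simpl; auto.
  - destruct (inb x s) eqn:E; simpl; auto.
    apply Nat.eqb_neq. apply inb_len in E. pose proof (codim_le s). lia.
Qed.

Definition trip := (list bool * support * R)%type.
Definition lab (t : trip) : list bool := fst (fst t).
Definition sup (t : trip) : support := snd (fst t).
Definition wt (t : trip) : R := snd t.
Definition bz (u : bool * support * R) : bool := fst (fst u).
Definition bs (u : bool * support * R) : support := snd (fst u).
Definition bw (u : bool * support * R) : R := snd u.

Definition base (n : nat) (w : bool -> support -> R) : list (bool * support * R) :=
  flat_map (fun z => map (fun s => (z, s, w z s)) (all_supports n)) [false; true].

Fixpoint amp (n : nat) (w : bool -> support -> R) (k : nat) : list trip :=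
  match k with
  | O => [([], repeat None n, 1)]
  | S k' => flat_map (fun t => flat_map (fun u =>
        match meet (sup t) (bs u) with
        | Some s => [(bz u :: lab t, s, wt t * bw u)]
        | None => []
        end) (base n w)) (amp n w k')
  end.

Lemma base_in n w u : In u (base n w) -> In (bs u) (all_supports n) /\ bw u = w (bz u) (bs u).
Proof.
  unfold base. intros H. apply in_flat_map in H. destruct H as [z [_ H]].
  apply in_map_iff in H. destruct H as [s [H1 H2]]. subst. simpl. auto.
Qed.

Lemma amp_in n w k t : In t (amp n w k) ->
  length (sup t) = n /\ length (lab t) = k.
Proof.
  revert t; induction k; intros t H; simpl in H.
  - destruct H as [H|[]]; subst. simpl. split; [apply repeat_length|reflexivity].
  - apply in_flat_map in H. destruct H as [t0 [Ht0 H]]. apply in_flat_map in H.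
    destruct H as [u [Hu H]]. destruct (meet (sup t0) (bs u)) as [s|] eqn:E; [|destruct H].
    destruct H as [H|[]]; subst. apply IHk in Ht0. destruct Ht0.
    unfold sup, lab at 1; simpl. split.
    + apply meet_len in E. congruence.
    + simpl. f_equal. auto.
Qed.

Lemma amp_nonneg n w k t : (forall z s, In s (all_supports n) -> 0 <= w z s) ->
  In t (amp n w k) -> 0 <= wt t.
Proof.
  intros Hw. revert t; induction k; intros t H; simpl in H.
  - destruct H as [H|[]]; subst. unfold wt; simpl; lra.
  - apply in_flat_map in H. destruct H as [t0 [Ht0 H]]. apply in_flat_map in H.
    destruct H as [u [Hu H]]. destruct (meet (sup t0) (bs u)) as [s|] eqn:E; [|destruct H].
    destruct H as [H|[]]; subst. unfold wt at 1; simpl.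
    apply Rmult_le_pos; auto. apply base_in in Hu. destruct Hu as [H1 H2]. rewrite H2; auto.
Qed.

Definition Hm (phi : bool -> R) (zs : list bool) : R := fold_right (fun z r => phi z * r) 1 zs.

Definition sc (n : nat) (x : list bool) (f : support -> R) : R :=
  lsum (fun s => if inb x s then f s else 0) (all_supports n).

Lemma base_sum n w x (phi : bool -> R) :
  lsum (fun u => if inb x (bs u) then bw u * phi (bz u) else 0) (base n w)
  = phi false * sc n x (w false) + phi true * sc n x (w true).
Proof.
  unfold base, sc. rewrite lsum_flat_map. rewrite !lsum_cons, lsum_nil, !lsum_map.
  rewrite <- !lsum_scal. unfold bs, bw, bz; simpl.
  assert (forall z, lsum (fun a => if inb x a then w z a * phi z else 0) (all_supports n)
     = lsum (fun a => phi z * (if inb x a then w z a else 0)) (all_supports n)).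
  { intros z. apply lsum_ext. intros a _. destruct (inb x a); lra. }
  rewrite !H. lra.
Qed.

Lemma amp_mult n w k x (phi : bool -> R) : length x = n ->
  lsum (fun t => if inb x (sup t) then wt t * Hm phi (lab t) else 0) (amp n w k)
  = (lsum (fun u => if inb x (bs u) then bw u * phi (bz u) else 0) (base n w)) ^ k.
Proof.
  intros Hx. induction k.
  - cbn [amp pow]. rewrite lsum_cons, lsum_nil. unfold sup, wt, lab; simpl. subst n. rewrite inb_repeat.
    simpl. lra.
  - cbn [amp]. rewrite lsum_flat_map. cbn [pow]; rewrite Rmult_comm, <- IHk.
    rewrite <- lsum_scal_r. apply lsum_ext. intros t _.
    rewrite lsum_flat_map, <- lsum_scal. apply lsum_ext. intros u _.
    pose proof (meet_in x (sup t) (bs u)) as M.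
    destruct (meet (sup t) (bs u)) as [s|].
    + rewrite lsum_cons, lsum_nil.
      change (sup (bz u :: lab t, s, wt t * bw u)) with s.
      change (lab (bz u :: lab t, s, wt t * bw u)) with (bz u :: lab t).
      change (wt (bz u :: lab t, s, wt t * bw u)) with (wt t * bw u). simpl Hm.
      destruct (inb x (sup t)), (inb x (bs u)), (inb x s); simpl in M; try discriminate; lra.
    + rewrite lsum_nil. destruct (inb x (sup t)), (inb x (bs u)); simpl in M; try discriminate; lra.
Qed.

Lemma base_obj n w : lsum (fun u => bw u * 2 ^ codim (bs u)) (base n w) = qprt_objective n w.
Proof.
  unfold base, qprt_objective. rewrite lsum_flat_map. apply lsum_ext. intros z _.
  rewrite lsum_map. reflexivity.
Qed.

Lemma amp_obj n w k : (forall z s, In s (all_supports n) -> 0 <= w z s) ->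
  lsum (fun t => wt t * 2 ^ codim (sup t)) (amp n w k) <= (qprt_objective n w) ^ k.
Proof.
  intros Hw. assert (Hobj : 0 <= qprt_objective n w).
  { rewrite <- base_obj. apply lsum_nonneg. intros u Hu. apply base_in in Hu. destruct Hu as [H1 H2].
    unfold bw in *; rewrite H2. apply Rmult_le_pos; auto. apply pow_le; lra. }
  induction k.
  - cbn [amp pow]. rewrite lsum_cons, lsum_nil. unfold wt, sup; simpl. rewrite codim_repeat. simpl; lra.
  - cbn [amp]. rewrite lsum_flat_map. cbn [pow]; rewrite Rmult_comm.
    apply Rle_trans with (lsum (fun t => wt t * 2 ^ codim (sup t)) (amp n w k) * qprt_objective n w).
    2: { apply Rmult_le_compat_r; auto. }
    rewrite <- base_obj, <- lsum_scal_r. apply lsum_le. intros t Ht.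
    rewrite lsum_flat_map, <- lsum_scal. apply lsum_le. intros u Hu.
    pose proof (amp_nonneg n w k t Hw Ht).
    pose proof (base_in n w u Hu) as [Hu1 Hu2].
    assert (0 <= bw u) by (rewrite Hu2; auto).
    destruct (meet (sup t) (bs u)) as [s|] eqn:E.
    + rewrite lsum_cons, lsum_nil.
      change (sup (bz u :: lab t, s, wt t * bw u)) with s.
      change (wt (bz u :: lab t, s, wt t * bw u)) with (wt t * bw u).
      apply meet_codim in E.
      assert (2 ^ codim s <= 2 ^ codim (sup t) * 2 ^ codim (bs u)).
      { rewrite <- pow_add. apply Rle_pow; lra || lia. }
      unfold wt, bw in *. 
      assert (0 <= snd t * snd u) by (apply Rmult_le_pos; auto).
      nra.
    + rewrite lsum_nil. apply Rmult_le_pos; [apply Rmult_le_pos; auto; apply pow_le; lra|].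
      apply Rmult_le_pos; auto; apply pow_le; lra.
Qed.

Fixpoint ntrue (zs : list bool) : nat :=
  match zs with [] => O | b :: r => ((if b then 1 else 0) + ntrue r)%nat end.
Definition maj (zs : list bool) : bool := Nat.ltb (length zs) (2 * ntrue zs).
Fixpoint wrong (b : bool) (zs : list bool) : nat :=
  match zs with [] => O | z :: r => ((if Bool.eqb z b then 0 else 1) + wrong b r)%nat end.

Lemma wrong_false zs : wrong false zs = ntrue zs.
Proof. induction zs as [|[|] zs IH]; simpl; lia. Qed.
Lemma wrong_true zs : (wrong true zs + ntrue zs = length zs)%nat.
Proof. induction zs as [|[|] zs IH]; simpl; lia. Qed.
Lemma maj_wrong zs b : maj zs <> b -> (length zs <= 2 * wrong b zs)%nat.
Proof.
  unfold maj. destruct b; intros H.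
  - destruct (Nat.ltb (length zs) (2 * ntrue zs)) eqn:E; [congruence|].
    apply Nat.ltb_ge in E. pose proof (wrong_true zs). lia.
  - destruct (Nat.ltb (length zs) (2 * ntrue zs)) eqn:E; [|congruence].
    apply Nat.ltb_lt in E. rewrite wrong_false. lia.
Qed.

Lemma Hm_r (r : R) b zs : Hm (fun z => if Bool.eqb z b then 1 else r ^ 2) zs = r ^ (2 * wrong b zs).
Proof.
  induction zs as [|z zs IH]; [simpl; lra|].
  transitivity ((if Bool.eqb z b then 1 else r^2) * Hm (fun z => if Bool.eqb z b then 1 else r ^ 2) zs).
  reflexivity. rewrite IH. simpl wrong.
  destruct (Bool.eqb z b).
  - simpl (0 + _)%nat. ring.
  - replace (2 * (1 + wrong b zs))%nat with (2 + 2 * wrong b zs)%nat by lia.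
    rewrite pow_add. ring.
Qed.
Lemma Hm_1 zs : Hm (fun _ => 1) zs = 1.
Proof. induction zs; simpl; auto. rewrite <- IHzs at 2. simpl. ring. Qed.

Definition wamp (n : nat) (w : bool -> support -> R) (k : nat) (z : bool) (s : support) : R :=
  lsum (fun t => if sup_eqb (sup t) s then (if Bool.eqb (maj (lab t)) z then wt t else 0) else 0)
    (amp n w k).

Lemma sum_containing_sc n x f : sum_containing n x f = sc n x f.
Proof.
  unfold sum_containing, sc. rewrite lsum_filter. apply lsum_ext. intros s _.
  destruct (excluded_middle_informative (in_subcube x s)) as [H|H].
  - apply inb_spec in H. rewrite H. reflexivity.
  - destruct (inb x s) eqn:E; [apply inb_spec in E; contradiction|reflexivity].
Qed.

Lemma sc_collapse n x w k (G : trip -> R) :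
  sc n x (fun s => lsum (fun t => if sup_eqb (sup t) s then G t else 0) (amp n w k))
  = lsum (fun t => if inb x (sup t) then G t else 0) (amp n w k).
Proof.
  unfold sc.
  transitivity (lsum (fun s => (if inb x s then 1 else 0) *
     lsum (fun t => if sup_eqb (sup t) s then G t else 0) (amp n w k)) (all_supports n)).
  { apply lsum_ext; intros s _. destruct (inb x s); ring. }
  rewrite collapse. 2: { intros t Ht. apply (amp_in n w k t Ht). }
  apply lsum_ext; intros t _. destruct (inb x (sup t)); ring.
Qed.

Lemma sc_plus n x f g : sc n x (fun s => f s + g s) = sc n x f + sc n x g.
Proof. unfold sc. rewrite <- lsum_plus. apply lsum_ext; intros s _. destruct (inb x s); ring. Qed.
Lemma sc_nonneg n x f : (forall s, In s (all_supports n) -> 0 <= f s) -> 0 <= sc n x f.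
Proof. intros H. unfold sc. apply lsum_nonneg. intros s Hs. destruct (inb x s); auto; lra. Qed.

Lemma div_pos' a b : 0 <= a -> 0 < b -> 0 <= a / b.
Proof. intros. unfold Rdiv. apply Rmult_le_pos; auto. left; apply Rinv_0_lt_compat; auto. Qed.
Lemma div_spos' a b : 0 < a -> 0 < b -> 0 < a / b.
Proof. intros. unfold Rdiv. apply Rmult_lt_0_compat; auto. apply Rinv_0_lt_compat; auto. Qed.

Lemma sc_ext n x f g : (forall s, f s = g s) -> sc n x f = sc n x g.
Proof. intros H. unfold sc. apply lsum_ext; intros s _. rewrite H; reflexivity. Qed.

Lemma amp_feas n g eps delta w k : 0 < eps < 1/2 -> 0 < delta ->
  (4 * eps * (1 - eps)) ^ k <= delta ^ 2 ->
  qprt_feasible n eps g w -> qprt_feasible n delta g (wamp n w k).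
Proof.
  intros He Hd Hk [Hw [H2 H3]].
  assert (Hs : forall x, length x = n ->
     lsum (fun t => if inb x (sup t) then wt t else 0) (amp n w k) = 1 /\
     sc n x (w false) + sc n x (w true) = 1).
  { intros x Hx.
    assert (A : sc n x (w false) + sc n x (w true) = 1).
    { specialize (H3 x Hx). rewrite sum_containing_sc in H3. rewrite <- H3, <- sc_plus.
      apply sc_ext. intros s. rewrite !lsum_cons, lsum_nil. ring. }
    split; auto.
    pose proof (amp_mult n w k x (fun _ => 1) Hx) as M. rewrite base_sum in M.
    transitivity (lsum (fun t => if inb x (sup t) then wt t * Hm (fun _ => 1) (lab t) else 0) (amp n w k)).
    { apply lsum_ext. intros t _. rewrite Hm_1. destruct (inb x (sup t)); ring. }
    rewrite M. replace (1 * sc n x (w false) + 1 * sc n x (w true)) with 1 by lra. apply pow1. }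
  split; [|split].
  - intros z s _. unfold wamp. apply lsum_nonneg. intros t Ht.
    destruct (sup_eqb (sup t) s); [destruct (Bool.eqb (maj (lab t)) z)|]; try lra.
    apply (amp_nonneg n w k t Hw Ht).
  - intros x Hx. rewrite sum_containing_sc. unfold wamp. rewrite sc_collapse.
    destruct (Hs x Hx) as [T Hsum].
    specialize (H2 x Hx). rewrite sum_containing_sc in H2.
    set (a0 := sc n x (w false)) in *. set (a1 := sc n x (w true)) in *.
    assert (Ha0 : 0 <= a0) by (apply sc_nonneg; auto).
    assert (Ha1 : 0 <= a1) by (apply sc_nonneg; auto).
    set (E := lsum (fun t => if inb x (sup t) then (if Bool.eqb (maj (lab t)) (g x) then 0 else wt t) else 0) (amp n w k)).
    set (r := sqrt ((1 - eps) / eps)).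
    assert (Hr2 : r ^ 2 = (1 - eps) / eps).
    { unfold r. simpl. rewrite Rmult_1_r. apply sqrt_sqrt. apply div_pos'; lra. }
    assert (Hr0 : 0 < r). { unfold r. apply sqrt_lt_R0. apply div_spos'; lra. }
    assert (Hr2e : r ^ 2 * eps = 1 - eps). { rewrite Hr2. field. lra. }
    assert (Hr1 : 1 <= r).
    { destruct (Rle_or_lt 1 r) as [h|h]; auto. exfalso.
      assert (r ^ 2 < 1) by (simpl; nra). nra. }
    set (phi := fun z => if Bool.eqb z (g x) then 1 else r ^ 2).
    set (P := phi false * a0 + phi true * a1).
    assert (HP : 0 <= P <= 2 * (1 - eps)).
    { assert (Hq : (if g x then a1 else a0) >= 1 - eps) by (destruct (g x); exact H2).
      unfold P, phi. assert (1 <= r ^ 2) by (simpl; nra).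
      clearbody r. remember (r ^ 2) as R2. clear HeqR2.
      destruct (g x); simpl; split; nra. }
    assert (HE : E <= P ^ k * / r ^ k).
    { pose proof (base_sum n w x phi) as BS. pose proof (amp_mult n w k x phi Hx) as AM.
      fold a0 a1 in BS. unfold P. rewrite <- BS, <- AM, <- lsum_scal_r.
      unfold E. apply lsum_le. intros t Ht. destruct (amp_in n w k t Ht) as [_ Hl].
      pose proof (amp_nonneg n w k t Hw Ht).
      assert (Hrk : 0 < r ^ k) by (apply pow_lt; lra).
      destruct (inb x (sup t)); [|lra]. unfold phi. rewrite Hm_r.
      destruct (Bool.eqb (maj (lab t)) (g x)) eqn:Em.
      - apply Rmult_le_pos; [apply Rmult_le_pos; auto; apply pow_le; lra|].
        left; apply Rinv_0_lt_compat; auto.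
      - apply Bool.eqb_false_iff in Em. apply maj_wrong in Em. rewrite Hl in Em.
        replace (2 * wrong (g x) (lab t))%nat with (k + (2 * wrong (g x) (lab t) - k))%nat by lia.
        rewrite pow_add.
        replace (wt t * (r ^ k * r ^ (2 * wrong (g x) (lab t) - k)) * / r ^ k)
          with (wt t * r ^ (2 * wrong (g x) (lab t) - k)) by (field; lra).
        pose proof (pow_R1_Rle r (2 * wrong (g x) (lab t) - k) Hr1). nra. }
    set (rho := 2 * (1 - eps) / r).
    assert (Hrho : rho ^ k <= delta).
    { assert (rho ^ 2 = 4 * eps * (1 - eps)).
      { assert (E1 : rho * r = 2 * (1 - eps)) by (unfold rho; field; lra).
        apply Rmult_eq_reg_r with (r ^ 2 * eps); [|simpl; nra].
        replace (rho ^ 2 * (r ^ 2 * eps)) with ((rho * r) ^ 2 * eps) by ring.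
        rewrite E1, Hr2e. ring. }
      assert ((rho ^ k) ^ 2 <= delta ^ 2).
      { rewrite <- pow_mult, Nat.mul_comm, pow_mult, H. auto. }
      assert (0 <= rho ^ k) by (apply pow_le; unfold rho; apply div_pos'; lra).
      simpl in H0. nra. }
    assert (P ^ k * / r ^ k <= rho ^ k).
    { rewrite <- pow_inv, <- Rpow_mult_distr. apply pow_incr. split.
      - apply Rmult_le_pos; [lra|]. left; apply Rinv_0_lt_compat; lra.
      - unfold rho. unfold Rdiv. apply Rmult_le_compat_r; [left; apply Rinv_0_lt_compat; lra|lra]. }
    assert (Tsplit : lsum (fun t => if inb x (sup t) then (if Bool.eqb (maj (lab t)) (g x) then wt t else 0) else 0) (amp n w k) + E = 1).
    { rewrite <- T. unfold E. rewrite <- lsum_plus. apply lsum_ext. intros t _.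
      destruct (inb x (sup t)), (Bool.eqb (maj (lab t)) (g x)); ring. }
    lra.
  - intros x Hx. rewrite sum_containing_sc.
    destruct (Hs x Hx) as [T _]. rewrite <- T, <- sc_collapse with (w := w).
    apply sc_ext. intros s. rewrite !lsum_cons, lsum_nil. unfold wamp. rewrite Rplus_0_r, <- lsum_plus.
    apply lsum_ext. intros t _. destruct (sup_eqb (sup t) s), (maj (lab t)); simpl; ring.
Qed.

Lemma wamp_obj n w k : (forall z s, In s (all_supports n) -> 0 <= w z s) ->
  qprt_objective n (wamp n w k) <= (qprt_objective n w) ^ k.
Proof.
  intros Hw. eapply Rle_trans; [|apply (amp_obj n w k Hw)].
  right. unfold qprt_objective. rewrite !lsum_cons, lsum_nil, Rplus_0_r, <- lsum_plus.
  transitivity (lsum (fun s => 2 ^ codim s * lsum (fun t => if sup_eqb (sup t) s then wt t else 0) (amp n w k)) (all_supports n)).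
  { apply lsum_ext. intros s _. rewrite <- Rmult_plus_distr_r, Rmult_comm. f_equal.
    unfold wamp. rewrite <- lsum_plus. apply lsum_ext. intros t _.
    destruct (sup_eqb (sup t) s), (maj (lab t)); simpl; ring. }
  rewrite collapse. 2: { intros t Ht. apply (amp_in n w k t Ht). }
  apply lsum_ext; intros; ring.
Qed.

Definition pt (s : support) : list bool := map (fun o => match o with Some b => b | None => false end) s.
Lemma pt_map x : pt (map Some x) = x.
Proof. induction x; simpl; f_equal; auto. Qed.

Lemma sc_point n x (F : support -> R) : length x = n ->
  sc n x (fun s => if Nat.eqb (codim s) n then F s else 0) = F (map Some x).
Proof.
  intros Hx. unfold sc.
  transitivity (lsum (fun s => if sup_eqb s (map Some x) then F s else 0) (all_supports n)).
  { apply lsum_ext. intros s _. rewrite <- inb_point. subst n.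
    destruct (inb x s), (Nat.eqb (codim s) (length x)); reflexivity. }
  apply delta. rewrite length_map. auto.
Qed.

Lemma sc_split n x w : sum_containing n x (fun s => lsum (fun z => w z s) [false; true])
   = sc n x (w false) + sc n x (w true).
Proof. rewrite sum_containing_sc, <- sc_plus. apply sc_ext. intros s. rewrite !lsum_cons, lsum_nil. ring. Qed.

Lemma point_feasible n eps g : 0 <= eps -> exists w, qprt_feasible n eps g w.
Proof.
  intros He. exists (fun z s => if Nat.eqb (codim s) n then (if Bool.eqb z (g (pt s)) then 1 else 0) else 0).
  split; [|split].
  - intros z s _. destruct (Nat.eqb (codim s) n), (Bool.eqb z (g (pt s))); lra.
  - intros x Hx. rewrite sum_containing_sc.
    rewrite (sc_point n x (fun s => if Bool.eqb (g x) (g (pt s)) then 1 else 0) Hx).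
    rewrite pt_map, Bool.eqb_reflx. lra.
  - intros x Hx. rewrite sum_containing_sc.
    transitivity (sc n x (fun s => if Nat.eqb (codim s) n then 1 else 0)); [|apply (sc_point n x (fun _ => 1) Hx)].
    apply sc_ext. intros s.
    rewrite !lsum_cons, lsum_nil. destruct (Nat.eqb (codim s) n), (g (pt s)); simpl; ring.
Qed.

Lemma obj_ge1 n eps g w : qprt_feasible n eps g w -> 1 <= qprt_objective n w.
Proof.
  intros [Hw [_ H3]].
  set (x0 := repeat false n). assert (Hx : length x0 = n) by apply repeat_length.
  specialize (H3 x0 Hx). rewrite sc_split in H3.
  unfold qprt_objective. rewrite !lsum_cons, lsum_nil, Rplus_0_r.
  assert (forall z, sc n x0 (w z) <= lsum (fun s => w z s * 2 ^ codim s) (all_supports n)).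
  { intros z. unfold sc. apply lsum_le. intros s Hs. pose proof (Hw z s Hs).
    pose proof (pow_R1_Rle 2 (codim s) ltac:(lra)). destruct (inb x0 s); nra. }
  pose proof (H false); pose proof (H true). lra.
Qed.

Lemma qprt_inf n eps g : 0 <= eps ->
  is_inf (fun v => exists w, qprt_feasible n eps g w /\ v = qprt_objective n w) (qprt n eps g).
Proof.
  intros He. unfold qprt. apply epsilon_spec.
  set (E := fun v => exists w, qprt_feasible n eps g w /\ v = qprt_objective n w).
  destruct (completeness (fun y => E (- y))) as [m [Hm1 Hm2]].
  - exists (-1). intros y [w [Hf Hy]]. apply obj_ge1 in Hf. lra.
  - destruct (point_feasible n eps g He) as [w Hw]. exists (- qprt_objective n w).
    exists w. split; auto. ring.
  - exists (- m). split.
    + intros v Hv. assert (- v <= m). { apply Hm1. red. rewrite Ropp_involutive. auto. } lra.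
    + intros b Hb. assert (m <= - b). { apply Hm2. intros y Hy. specialize (Hb _ Hy). lra. } lra.
Qed.

Lemma qprt_ge1 n eps g : 0 <= eps -> 1 <= qprt n eps g.
Proof.
  intros He. destruct (qprt_inf n eps g He) as [_ H]. apply H.
  intros v [w [Hf Hv]]. subst. eapply obj_ge1; eauto.
Qed.

Lemma ln_le' a b : 0 < a -> a <= b -> ln a <= ln b.
Proof. intros Ha [H|H]; [left; apply ln_increasing; auto|subst; lra]. Qed.

Lemma exp_pow a k : exp a ^ k = exp (INR k * a).
Proof. induction k. simpl. rewrite Rmult_0_l, exp_0; auto.
  rewrite S_INR. cbn [pow]. rewrite IHk, <- exp_plus. f_equal; ring. Qed.

Lemma exp_le' a b : a <= b -> exp a <= exp b.
Proof. intros [H|H]; [left; apply exp_increasing; auto|subst; lra]. Qed.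

Theorem mainTheorem8 :
  exists C : R, forall (n : nat) (g : list bool -> bool) (delta eps : R),
    0 < delta -> delta < eps -> eps < 1/2 ->
    log2 (qprt n delta g) <=
      C / (1/2 - eps)^2 * log2 (1 / delta) * log2 (qprt n eps g).
Proof.
  exists 1. intros n g delta eps Hd Hde He.
  set (c := 1/2 - eps).
  assert (Hc : 0 < c < 1/2) by (unfold c; lra).
  set (L := ln (1 / delta)).
  assert (Hl2 : 0 < ln 2 < 1).
  { split. rewrite <- ln_1. apply ln_increasing; lra.
    rewrite <- (ln_exp 1). apply ln_increasing; [lra|]. pose proof (exp_ineq1 1 ltac:(lra)). lra. }
  assert (HL : ln 2 < L). { unfold L. apply ln_increasing; [lra|]. unfold Rdiv. rewrite Rmult_1_l.
    apply Rmult_lt_reg_l with delta; auto. rewrite Rinv_r; lra. }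
  set (xk := L / (2 * c ^ 2)).
  assert (Hc2 : 0 < c ^ 2) by (apply pow_lt; lra).
  assert (Hxk : 0 < xk) by (apply div_spos'; lra).
  destruct (archimed xk) as [Hu1 Hu2].
  set (k := Z.to_nat (up xk)).
  assert (Hk : INR k = IZR (up xk)).
  { unfold k. rewrite INR_IZR_INZ, Z2Nat.id; auto. apply Z.lt_le_incl, lt_0_IZR. lra. }
  assert (Hk0 : 0 < INR k) by lra.
  assert (HB : (4 * eps * (1 - eps)) ^ k <= delta ^ 2).
  { replace (4 * eps * (1 - eps)) with (1 - 4 * c ^ 2) by (unfold c; field).
    apply Rle_trans with (exp (- (4 * c ^ 2)) ^ k).
    { apply pow_incr. split; [simpl; nra|]. pose proof (exp_ineq1_le (- (4 * c ^ 2))). lra. }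
    rewrite exp_pow.
    assert (HLd : ln delta = - L).
    { unfold L. unfold Rdiv. rewrite Rmult_1_l, ln_Rinv; auto. ring. }
    assert (Ed : delta ^ 2 = exp (INR 2 * ln delta)) by (rewrite <- exp_pow, exp_ln; auto).
    rewrite Ed. apply exp_le'. rewrite HLd.
    assert (xk * (2 * c ^ 2) = L) by (unfold xk; field; lra).
    assert (INR 2 = 2) by (simpl; ring). rewrite H0.
    assert (xk <= INR k) by lra. nra. }
  assert (Hd0 : 0 <= delta) by lra. assert (He0 : 0 <= eps) by lra.
  pose proof (qprt_ge1 n eps g He0) as Hqe. pose proof (qprt_ge1 n delta g Hd0) as Hqd.
  set (qe := qprt n eps g) in *. set (qd := qprt n delta g) in *.
  assert (Key : ln qd <= INR k * ln qe).
  { destruct (qprt_inf n eps g He0) as [_ Hinf].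
    assert (exp (ln qd / INR k) <= qe).
    { apply Hinf. intros v [w [Hf Hv]]. subst v.
      assert (Hw' := amp_feas n g eps delta w k (conj (Rlt_trans _ _ _ Hd Hde) He) Hd HB Hf).
      assert (H1 : qd <= qprt_objective n (wamp n w k)).
      { destruct (qprt_inf n delta g Hd0) as [Hlow _]. apply Hlow. exists (wamp n w k). auto. }
      assert (H2 := wamp_obj n w k (proj1 Hf)).
      assert (H3 := obj_ge1 n eps g w Hf).
      assert (ln qd <= INR k * ln (qprt_objective n w)).
      { rewrite <- ln_pow; [|lra]. apply ln_le'; lra. }
      rewrite <- (exp_ln (qprt_objective n w)); [|lra]. apply exp_le'.
      apply Rmult_le_reg_r with (INR k); auto. unfold Rdiv. rewrite Rmult_assoc, Rinv_l; lra. }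
    apply ln_le' in H; [|apply exp_pos]. rewrite ln_exp in H.
    apply Rmult_le_reg_r with (/ INR k). apply Rinv_0_lt_compat; auto.
    replace (INR k * ln qe * / INR k) with (ln qe) by (field; lra). exact H. }
  assert (HQ : 0 <= ln qe) by (rewrite <- ln_1; apply ln_le'; lra).
  assert (HK : INR k * (c ^ 2 * ln 2) <= L).
  { assert (INR k <= xk + 1) by lra.
    apply Rle_trans with ((xk + 1) * (c ^ 2 * ln 2)). { apply Rmult_le_compat_r; nra. }
    replace ((xk + 1) * (c ^ 2 * ln 2)) with (L * ln 2 / 2 + c ^ 2 * ln 2) by (unfold xk; field; lra).
    assert (c ^ 2 < 1/4) by (simpl; nra).
    assert (c ^ 2 * ln 2 < L / 4) by nra. assert (L * ln 2 / 2 <= L / 2) by nra. lra. }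
  unfold log2. fold L. fold c.
  assert (Hcne : c <> 0) by lra. assert (Hlne : ln 2 <> 0) by lra.
  apply Rle_trans with (INR k * ln qe / ln 2).
  { unfold Rdiv. apply Rmult_le_compat_r; [left; apply Rinv_0_lt_compat; lra|auto]. }
  replace (INR k * ln qe / ln 2) with ((INR k * (c ^ 2 * ln 2)) * ln qe / (c ^ 2 * ln 2 * ln 2)) by (field; auto).
  replace (1 / c ^ 2 * (L / ln 2) * (ln qe / ln 2)) with (L * ln qe / (c ^ 2 * ln 2 * ln 2)) by (field; auto).
  unfold Rdiv. apply Rmult_le_compat_r. { left; apply Rinv_0_lt_compat. apply Rmult_lt_0_compat; [apply Rmult_lt_0_compat|]; lra. }
  apply Rmult_le_compat_r; auto.
Qed.
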